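(* Let $r$ be a parameter and let $H=(h_{n,k})_{n,k\ge0}$ be the exponential Riordan array $\left[e^x,x(1+rx/2)\right]$ (its $h$-matrix is $H$ itself). Let $\Gamma=(\gamma_{n,k})$ be its $\gamma$-matrix, and let $eF_r=H\cdot[e^x,x]$ be its $f$-matrix. Then, with ordinary generating functions $\sum_{n,k}a_{n,k}x^ny^k$: (i) the ordinary generating function of $\Gamma$ is $\mathcal{J}(1,1,1,\ldots;\, ry,2ry,3ry,\ldots)$; (ii) the ordinary generating function of $H$ is $\mathcal{J}(y+1,y+1,y+1,\ldots;\, ry,2ry,3ry,\ldots)$; (iii) the ordinary generating function of the reversal of $eF_r$ (the matrix with $(n,k)$ entry equal to the $(n,n-k)$ entry of $eF_r$) is $\mathcal{J}(2y+1,2y+1,2y+1,\ldots;\, ry(y+1),2ry(y+1),3ry(y+1),\ldots)$.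
   Context: An exponential Riordan array $[g(x),f(x)]$ is the lower-triangular matrix $(a_{n,k})_{n,k\ge0}$ with $a_{n,k}=\frac{n!}{k!}[x^n]g(x)f(x)^k$, where $g(0)=1$, $f(0)=0$, $f'(0)=1$; $[e^x,x]$ is the binomial matrix $\left(\binom{n}{k}\right)$. The matrix $H=\left[e^x,x(1+rx/2)\right]$ is Pascal-like: $h_{n,0}=h_{n,n}=1$ and $h_{n,n-k}=h_{n,k}$. Its $\gamma$-matrix $\Gamma=(\gamma_{n,k})_{0\le k\le \lfloor n/2\rfloor}$ is defined by $\sum_{k=0}^n h_{n,k}y^k=\sum_{k=0}^{\lfloor n/2\rfloor}\gamma_{n,k}\,y^k(1+y)^{n-2k}$ for all $n\ge0$. The $f$-matrix of $H$ is the product $H\cdot[e^x,x]$. The notation $\mathcal{J}(\alpha_1,\alpha_2,\ldots;\beta_1,\beta_2,\ldots)$ denotes the Jacobi continued fraction $\cfrac{1}{1-\alpha_1x-\cfrac{\beta_1x^2}{1-\alpha_2x-\cfrac{\beta_2x^2}{1-\cdots}}}$, a formal power series in $x$. *)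

(* Defs.v *)
From mathcomp Require Import all_boot all_algebra.
Set Implicit Arguments. Unset Strict Implicit. Unset Printing Implicit Defensive.
Import GRing.Theory.
Local Open Scope ring_scope.

(* Formal power series in x over a ring T, as coefficient sequences. *)
Definition fps (T : Type) := nat -> T.

Section Series.
Variable T : ringType.
Definition sC (c : T) : fps T := fun n => if n == 0%N then c else 0.
Definition sone : fps T := sC 1.
Definition sx : fps T := fun n => if n == 1%N then 1 else 0.
Definition sadd (a b : fps T) : fps T := fun n => a n + b n.
Definition sopp (a : fps T) : fps T := fun n => - a n.
Definition ssub (a b : fps T) : fps T := sadd a (sopp b).
Definition smul (a b : fps T) : fps T :=
  fun n => \sum_(i < n.+1) a i * b (n - i)%N.
Definition sexpn (a : fps T) (k : nat) : fps T := iter k (smul a) sone.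
End Series.

Section SeriesInv.
Variable T : unitRingType.
(* multiplicative inverse of a power series whose constant term is a unit:
   b_0 = a_0^-1,  b_n = - a_0^-1 * sum_{i=1}^{n} a_i b_{n-i} *)
Fixpoint sinv_rec (a : fps T) (n : nat) : seq T :=
  (* returns [:: b_0; ...; b_n] *)
  match n with
  | 0 => [:: (a 0%N)^-1]
  | n'.+1 => let bs := sinv_rec a n' in
      rcons bs (- (a 0%N)^-1 *
        \sum_(i < n'.+1) a i.+1 * nth 0 bs (n' - i)%N)
  end.
Definition sinv (a : fps T) : fps T := fun n => nth 0 (sinv_rec a n) n.
End SeriesInv.

Definition sexp (R : fieldType) : fps R := fun n => (n`!%:R)^-1.

Definition exp_riordan (R : fieldType) (g f : fps R) (n k : nat) : R :=
  n`!%:R / k`!%:R * smul g (sexpn f k) n.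

Definition Hmat (R : fieldType) (r : R) : nat -> nat -> R :=
  exp_riordan (sexp R) (sadd (sx R) (smul (sC (r / 2%:R)) (smul (sx R) (sx R)))).

Definition binmat (R : fieldType) : nat -> nat -> R :=
  exp_riordan (sexp R) (sx R).

Definition lt_mxmul (R : ringType) (A B : nat -> nat -> R) (n k : nat) : R :=
  \sum_(j < n.+1) A n j * B j k.

Definition eFmat (R : fieldType) (r : R) : nat -> nat -> R :=
  lt_mxmul (Hmat r) (binmat R).

Definition revmat (R : ringType) (A : nat -> nat -> R) (n k : nat) : R :=
  if (k <= n)%N then A n (n - k)%N else 0.

Definition is_gamma_matrix (R : ringType) (h g : nat -> nat -> R) : Prop :=
  (forall n k, (n./2 < k)%N -> g n k = 0) /\
  forall n : nat,
    \sum_(k < n.+1) h n k *: ('X^k : {poly R}) =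
    \sum_(k < n./2.+1) g n k *: ('X^k * (1 + 'X) ^+ (n - k.*2)%N).

(* Ordinary generating function sum_{n,k} a_{n,k} x^n y^k of a lower
   triangular matrix, as a power series in x with coefficients in R[y]. *)
Definition ogf (R : ringType) (A : nat -> nat -> R) : fps {poly R} :=
  fun n => \sum_(k < n.+1) A n k *: 'X^k.

(* Convergents of the J-fraction J(a_1,a_2,...; b_1,b_2,...):
   jconv d i = 1/(1 - a_i x - b_i x^2/(1 - a_{i+1} x - ...)) truncated at depth d *)
Fixpoint jconv (T : unitRingType) (a b : nat -> T) (d i : nat) : fps T :=
  match d with
  | 0 => sone T
  | d'.+1 => sinv (ssub (ssub (sone T) (smul (sC (a i)) (sx T)))
                        (smul (smul (sC (b i)) (smul (sx T) (sx T)))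
                              (jconv a b d' i.+1)))
  end.

(* A equals the J-fraction J(a_1,...; b_1,...) as a formal power series:
   each coefficient of A is the eventual value of that coefficient of the
   convergents (x-adic limit). Indices start at 1. *)
Definition is_Jfrac (T : unitRingType) (A : fps T) (a b : nat -> T) : Prop :=
  forall n : nat, exists M : nat, forall d : nat, (M <= d)%N ->
    jconv a b d 1 n = A n.

(* Main.v *)
Require Import Defs.
From mathcomp Require Import all_boot all_algebra.
From mathcomp Require Import ring zify.
From Stdlib Require Import FunctionalExtensionality.
Set Implicit Arguments. Unset Strict Implicit. Unset Printing Implicit Defensive.
Import GRing.Theory.
Local Open Scope ring_scope.


Definition sh (T : nzRingType) (a : fps T) : fps T :=
  fun n => if n is n'.+1 then a n' else 0.

Section FpsAlg.
Variable T : comNzRingType.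
Implicit Types a b c : fps T.

Lemma smul_coefM a b (p q : {poly T}) n :
  (forall i, (i <= n)%N -> p`_i = a i) -> (forall i, (i <= n)%N -> q`_i = b i) ->
  smul a b n = (p * q)`_n.
Proof.
move=> Hp Hq; rewrite coefM /smul; apply: eq_bigr => i _.
by rewrite Hp ?Hq // ?leq_subr // -ltnS.
Qed.

Definition Pn a n : {poly T} := \poly_(i < n.+1) a i.
Lemma Pn_coef a n i : (i <= n)%N -> (Pn a n)`_i = a i.
Proof. by move=> H; rewrite coef_poly ltnS H. Qed.

Lemma smulC a b : smul a b = smul b a.
Proof.
apply: functional_extensionality => n.
rewrite (@smul_coefM a b (Pn a n) (Pn b n)); try by move=> i; apply: Pn_coef.
rewrite mulrC -(@smul_coefM b a) //; move=> i; apply: Pn_coef.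
Qed.

Lemma smulA a b c : smul (smul a b) c = smul a (smul b c).
Proof.
apply: functional_extensionality => n.
rewrite (@smul_coefM (smul a b) c (Pn a n * Pn b n) (Pn c n)); last first.
- by move=> i; apply: Pn_coef.
- move=> i Hi; rewrite -(@smul_coefM a b) // => j Hj; apply: Pn_coef; exact: leq_trans Hj Hi.
rewrite -mulrA (@smul_coefM a (smul b c) (Pn a n) (Pn b n * Pn c n)) //.
- by move=> i; apply: Pn_coef.
- move=> i Hi; rewrite -(@smul_coefM b c) // => j Hj; apply: Pn_coef; exact: leq_trans Hj Hi.
Qed.

Lemma smulDl a b c : smul (sadd a b) c = sadd (smul a c) (smul b c).
Proof.
apply: functional_extensionality => n.
by rewrite /smul /sadd -big_split /=; apply: eq_bigr => i _; rewrite mulrDl.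
Qed.

Lemma smulNl a c : smul (sopp a) c = sopp (smul a c).
Proof.
apply: functional_extensionality => n.
by rewrite /smul /sopp -sumrN; apply: eq_bigr => i _; rewrite mulNr.
Qed.

Lemma smulBl a b c : smul (ssub a b) c = ssub (smul a c) (smul b c).
Proof. by rewrite /ssub smulDl smulNl. Qed.

Lemma smul1 a : smul (sone T) a = a.
Proof.
apply: functional_extensionality => n.
rewrite /smul big_ord_recl /sone /sC /= subn0 mul1r big1 ?addr0 // => i _.
by rewrite mul0r.
Qed.

Lemma smulr1 a : smul a (sone T) = a.
Proof. by rewrite smulC smul1. Qed.

Lemma smulC_coef (k : T) a n : smul (sC k) a n = k * a n.
Proof.
rewrite /smul big_ord_recl /sC /= subn0 big1 ?addr0 // => i _.
by rewrite mul0r.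
Qed.

Lemma smulx_coef a n : smul (sx T) a n = sh a n.
Proof.
case: n => [|n]; first by rewrite /smul big_ord_recl big_ord0 /sx /= mul0r addr0.
rewrite /smul big_ord_recl big_ord_recl /sx /= mul0r add0r mul1r subSS subn0.
rewrite big1 ?addr0 // => i _; by rewrite mul0r.
Qed.

Lemma smulxx_coef a n : smul (smul (sx T) (sx T)) a n = sh (sh a) n.
Proof.
by rewrite smulA smulx_coef /sh; case: n => [|n] //; rewrite smulx_coef.
Qed.

Lemma smul_eqL a a' b n : (forall i, (i <= n)%N -> a i = a' i) ->
  smul a b n = smul a' b n.
Proof.
move=> H; rewrite /smul; apply: eq_bigr => i _; rewrite H //; by rewrite -ltnS.
Qed.

End FpsAlg.

Section Inv.
Variable T : comUnitRingType.
Implicit Types a b c : fps T.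

Lemma size_sinv_rec a n : size (sinv_rec a n) = n.+1.
Proof. by elim: n => [|n IH] //=; rewrite size_rcons IH. Qed.

Lemma nth_sinv_rec a n i : (i <= n)%N -> nth 0 (sinv_rec a n) i = sinv a i.
Proof.
elim: n i => [|n IH] i Hi.
  by move: Hi; rewrite leqn0 => /eqP ->.
rewrite leq_eqVlt in Hi; case/orP: Hi => [/eqP -> //|Hi].
rewrite /= nth_rcons size_sinv_rec Hi; exact: IH.
Qed.

Lemma sinvS a n : sinv a n.+1 =
  - (a 0%N)^-1 * \sum_(i < n.+1) a i.+1 * sinv a (n - i)%N.
Proof.
rewrite {1}/sinv /= nth_rcons size_sinv_rec ltnn eqxx; congr (_ * _).
apply: eq_bigr => i _; rewrite nth_sinv_rec // leq_subr //.
Qed.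

Lemma smul_sinv a : a 0%N \is a GRing.unit -> smul a (sinv a) = sone T.
Proof.
move=> Hu; apply: functional_extensionality => n.
case: n => [|n].
  by rewrite /smul big_ord_recl big_ord0 addr0 /sinv /= divrr.
rewrite /smul big_ord_recl subn0 sinvS mulrA mulrN divrr // mulN1r.
rewrite /sone /sC /=.
under [in X in _ + X]eq_bigr => i _ do rewrite /bump leq0n add1n subSS.
by rewrite addNr.
Qed.

End Inv.


Section J.
Variable T : comUnitRingType.

Lemma jconv_psi (al be : nat -> T) (Ps : nat -> fps T) :
  Ps 0%N = sone T ->
  (forall i n, Ps i n = Ps i.+1 n - al i.+1 * sh (Ps i.+1) n
                        - be i.+1 * sh (sh (Ps i.+2)) n) ->
  forall d i n, (n < d.*2)%N -> smul (Ps i) (jconv al be d i.+1) n = Ps i.+1 n.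
Proof.
move=> P0 Hrel; elim=> [|d IH] i n //.
move=> Hn /=.
set J := jconv al be d i.+2.
set A := smul (sC (al i.+1)) (sx T).
set B := smul (sC (be i.+1)) (smul (sx T) (sx T)).
set Q := ssub (ssub (sone T) A) (smul B J).
have HQ0 : Q 0%N = 1.
  rewrite /Q /ssub /sadd /sopp /A smulC_coef /B smulA smulC_coef smulxx_coef /sx.
  rewrite /sone /sC /=; ring.
have HA : forall m, smul A (Ps i.+1) m = al i.+1 * sh (Ps i.+1) m.
  by move=> m; rewrite /A smulA smulC_coef smulx_coef.
have HB : forall m, (m < d.*2.+2)%N -> smul (smul B J) (Ps i.+1) m
                     = be i.+1 * sh (sh (Ps i.+2)) m.
  move=> m Hm; rewrite /B !smulA smulC_coef -smulA smulxx_coef; congr (_ * _).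
  case: m Hm => [|[|m]] Hm //=.
  by rewrite smulC IH.
have HQ : forall m, (m < d.*2.+2)%N -> smul (Ps i.+1) Q m = Ps i m.
  move=> m Hm; rewrite smulC /Q !smulBl smul1.
  rewrite /ssub /sadd /sopp HA HB // Hrel; ring.
rewrite (@smul_eqL _ (Ps i) (smul (Ps i.+1) Q)); last first.
  move=> j Hj; rewrite HQ //; apply: leq_ltn_trans Hj _; by rewrite doubleS in Hn.
rewrite smulA smul_sinv ?smulr1 // HQ0; exact: unitr1.
Qed.

Lemma jconv_psi_Jfrac (al be : nat -> T) (Ps : nat -> fps T) (m : fps T) :
  Ps 0%N = sone T ->
  (forall i n, Ps i n = Ps i.+1 n - al i.+1 * sh (Ps i.+1) n
                        - be i.+1 * sh (sh (Ps i.+2)) n) ->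
  (forall n, Ps 1%N n = m n) ->
  is_Jfrac m al be.
Proof.
move=> P0 Hrel Hm n; exists n.+1 => d Hd.
rewrite -Hm -(@jconv_psi al be Ps P0 Hrel d 0%N n); first by rewrite P0 smul1.
rewrite -addnn; apply: leq_trans Hd _; exact: leq_addr.
Qed.

Definition hPs (m : fps T) (i : nat) : fps T :=
  if i is i'.+1 then fun n => ('C(n + i', i'))%:R * m n else sone T.

Lemma hermite_Jfrac (a b : T) (m : fps T) (al be : nat -> T) :
  (forall i, al i = a) -> (forall k, be k = k%:R * b) ->
  m 0%N = 1 -> (forall n, m n.+1 = a * m n + n%:R * b * sh m n) ->
  is_Jfrac m al be.
Proof.
move=> Hal Hbe m0 mS.
apply: (@jconv_psi_Jfrac al be (hPs m)) => //; last first.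
  by move=> n; rewrite /= addn0 bin0 mul1r.
move=> i n; rewrite !Hal !Hbe.
case: i => [|i].
  case: n => [|[|n]] /=.
  - by rewrite bin0 m0 /sone /sC /=; ring.
  - rewrite (mS 0%N) m0 /sone /sC /= !bin0; ring.
  - rewrite (mS n.+1) /sone /sC /= !addn0 !bin0 addn1 bin1; ring.
case: n => [|[|n]] /=.
- rewrite !add0n !binn; ring.
- rewrite !add1n binSn binSn (mS 0%N) m0 /= add0n binn -(addn1 i.+1) natrD; ring.
- have E1 : 'C((n.+2 + i.+1), i.+1) = 'C(n.+2 + i, i) + 'C(n.+2 + i, i.+1).
    by rewrite addnS binS addnC.
  have E2 : (i.+2 * 'C(n + i.+2, i.+2) = n.+1 * 'C(n.+2 + i, i.+1))%N.
    rewrite mul_bin_left.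
    have -> : (n + i.+2 - i.+1 = n.+1)%N by lia.
    have -> : (n + i.+2 = n.+2 + i)%N by lia.
    done.
  rewrite E1 natrD.
  have -> : (n.+1 + i.+1 = n.+2 + i)%N by lia.
  have -> : (i.+2%:R * b * ('C(n + i.+2, i.+2)%:R * m n))
            = (n.+1%:R * b * ('C(n.+2 + i, i.+1)%:R * m n)).
    have := congr1 (fun k : nat => k%:R : T) E2; rewrite /= !natrM => E2'.
    transitivity (b * m n * (i.+2%:R * 'C(n + i.+2, i.+2)%:R)); first ring.
    rewrite E2'; ring.
  rewrite (mS n.+1) /=; ring.
Qed.

End J.


Section Hm.
Variable R : fieldType.
Hypothesis hR : [pchar R] =i pred0.
Variable r : R.
Let c := r / 2%:R.

Lemma natr_neq0 n : (n > 0)%N -> (n%:R : R) != 0.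
Proof. by move=> Hn; have /pcharf0P -> := hR; rewrite -lt0n. Qed.

Lemma fact_neq0 n : (n`!%:R : R) != 0.
Proof. apply: natr_neq0; exact: fact_gt0. Qed.

Lemma cc : c + c = r.
Proof.
have h2 : (2%:R : R) != 0 by exact: natr_neq0.
by rewrite /c; field.
Qed.

Fixpoint Ef (k : nat) : fps R :=
  match k with
  | 0 => sexp R
  | k'.+1 => fun n => sh (Ef k') n + c * sh (sh (Ef k')) n
  end.

Definition fH : fps R := sadd (sx R) (smul (sC (r / 2%:R)) (smul (sx R) (sx R))).

Lemma Ef_smul k : smul (sexp R) (sexpn fH k) = Ef k.
Proof.
elim: k => [|k IH]; first by rewrite /sexpn /= smulr1.
rewrite /sexpn iterS -/(sexpn fH k) -smulA (smulC (sexp R)) smulA IH.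
apply: functional_extensionality => n.
rewrite /fH smulDl /sadd smulx_coef smulA smulC_coef smulxx_coef //.
Qed.

Lemma Hmat_Ef n k : Hmat r n k = n`!%:R / k`!%:R * Ef k n.
Proof. by rewrite /Hmat /exp_riordan -/fH Ef_smul. Qed.

Lemma Ef0 k : Ef k 0%N = if k is 0 then 1 else 0.
Proof. case: k => [|k] /=; last by rewrite mulr0 addr0. by rewrite /sexp /= invr1. Qed.

Lemma Ef_tri k n : (n < k)%N -> Ef k n = 0.
Proof.
elim: k n => [|k IH] n // Hn /=.
case: n Hn => [|n] Hn /=; first by rewrite mulr0 addr0.
rewrite IH //; case: n Hn => [|n] Hn /=; first by rewrite mulr0 addr0.
by rewrite IH ?mulr0 ?addr0 // ltnW.
Qed.

Lemma alg (x1 x0 s0 A B M K : R) : (M + 1) * x1 = x0 + K * A -> M * x0 = s0 + K * B ->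
  K * (A + c * B - x1 - r * x0) = 0 ->
  (M + 1 + 1) * (x1 + c * x0) = x0 + c * s0 + (K + 1) * (x1 + r * x0).
Proof.
move=> H1 H2 H3; apply: subr0_eq.
transitivity (((M+1)*x1 - (x0 + K*A)) + c*(M*x0 - (s0+K*B)) + K*(A + c*B - x1 - r*x0)
   + (c + c - r)*x0); first ring.
by rewrite H1 H2 H3 cc; ring.
Qed.

Lemma EfD k n : n%:R * Ef k n = sh (Ef k) n + k%:R * (sh (Ef k.-1) n + r * sh (sh (Ef k.-1)) n).
Proof.
elim: k n => [|k IH] n.
  rewrite mul0r addr0; case: n => [|n] /=; first by rewrite mul0r.
  rewrite /sexp factS natrM invfM mulrA mulfV ?mul1r //; exact: natr_neq0.
case: n => [|[|m]] /=.
- ring.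
- rewrite Ef0; case: k {IH} => [|k] /=; ring.
have H1 := IH m.+1; have H0 := IH m; simpl in H1, H0.
rewrite -[m.+1%:R]natr1 in H1.
rewrite -[m.+2%:R]natr1 -[m.+1%:R]natr1 -[k.+1%:R]natr1.
apply: alg H1 H0 _.
case: k {IH} => [|k]; first by rewrite mul0r.
rewrite /=; ring.
Qed.


Lemma Hmat_col0 n : Hmat r n 0%N = 1.
Proof. by rewrite Hmat_Ef /= /sexp fact0 divr1 mulfV // fact_neq0. Qed.

Lemma Hmat_tri n k : (n < k)%N -> Hmat r n k = 0.
Proof. by move=> H; rewrite Hmat_Ef Ef_tri // mulr0. Qed.

Lemma Hrec n k : Hmat r n.+1 k =
  Hmat r n k + sh (Hmat r n) k + n%:R * r * sh (Hmat r n.-1) k.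
Proof.
case: k => [|j]; first by rewrite !Hmat_col0 /=; ring.
rewrite /= (Hmat_Ef n.+1) factS natrM.
transitivity (n`!%:R / j.+1`!%:R * (n.+1%:R * Ef j.+1 n.+1)); first ring.
rewrite EfD /= !Hmat_Ef factS natrM.
have F1 := fact_neq0 j; have F2 := @natr_neq0 j.+1 (ltn0Sn _).
case: n => [|n] /=.
  rewrite mul0r mulr0 addr0 mulr0 addr0; field.
  by rewrite F1 /= addrC natr1.
rewrite factS natrM.
have F3 := fact_neq0 n; have F4 := @natr_neq0 n.+1 (ltn0Sn _).
field.
by rewrite F1 /= addrC natr1.
Qed.

End Hm.


Section HomS.
Variable R : fieldType.
Implicit Types (c d : nat -> R) (u v : {poly R}).

Definition HomP c u v N : {poly R} := \sum_(i < N.+1) c i *: (u ^+ i * v ^+ (N - i)).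

Lemma HomP_ext c d u v N : (forall i, c i = d i) -> HomP c u v N = HomP d u v N.
Proof. by move=> H; apply: eq_bigr => i _; rewrite H. Qed.

Lemma HomP_lin (p q : R) c d u v N :
  HomP (fun i => p * c i + q * d i) u v N = p *: HomP c u v N + q *: HomP d u v N.
Proof.
rewrite /HomP !scaler_sumr -big_split /=; apply: eq_bigr => i _.
by rewrite scalerDl !scalerA.
Qed.

Lemma HomP_sh c u v N : HomP (sh c) u v N.+1 = u * HomP c u v N.
Proof.
rewrite /HomP big_ord_recl /= scale0r add0r mulr_sumr; apply: eq_bigr => i _.
rewrite /bump leq0n add1n subSS exprS -scalerAr mulrA //.
Qed.

Lemma HomP_up c u v N : c N.+1 = 0 -> HomP c u v N.+1 = v * HomP c u v N.
Proof.
move=> H; rewrite /HomP big_ord_recr /= H scale0r addr0 mulr_sumr.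
apply: eq_bigr => i _; rewrite /= subSn; last by rewrite -ltnS.
by rewrite exprS -scalerAr mulrCA.
Qed.

Lemma HomP_rec (cr : nat -> nat -> R) (p q s : R) u v :
  (forall n i, (n < i)%N -> cr n i = 0) ->
  (forall n i, cr n.+1 i = p * cr n i + q * sh (cr n) i + n%:R * s * sh (cr n.-1) i) ->
  forall n, HomP (cr n.+1) u v n.+1 =
    (p *: v + q *: u) * HomP (cr n) u v n
    + n%:R * (s *: (u * v)) * sh (fun m => HomP (cr m) u v m) n.
Proof.
move=> Htri Hrec n.
rewrite (@HomP_ext _ (fun i => 1 * (p * cr n i + q * sh (cr n) i) + (n%:R * s) * sh (cr n.-1) i)); last first.
  by move=> i; rewrite Hrec mul1r.
rewrite HomP_lin scale1r HomP_lin HomP_sh HomP_up ?Htri //.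
case: n => [|n] /=.
  by rewrite mul0r scale0r !mul0r !addr0 mulrDl !scalerAl.
rewrite HomP_sh (@HomP_up (cr n) u v n) ?Htri //.
rewrite mulrDl !scalerAl; congr (_ + _).
by rewrite -scalerA scaler_nat mulr_natl !mulrA -mulrnAl.
Qed.

End HomS.


Section GmS.
Variable R : fieldType.
Implicit Types (c d : nat -> R).

Definition Gm c N : {poly R} := \sum_(k < N.+1) c k *: ('X^k * (1 + 'X) ^+ (N - k.*2)).

Lemma Gm_ext c d N : (forall i, c i = d i) -> Gm c N = Gm d N.
Proof. by move=> H; apply: eq_bigr => i _; rewrite H. Qed.

Lemma Gm_lin (p q : R) c d N :
  Gm (fun i => p * c i + q * d i) N = p *: Gm c N + q *: Gm d N.
Proof.
rewrite /Gm !scaler_sumr -big_split /=; apply: eq_bigr => i _.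
by rewrite scalerDl !scalerA.
Qed.

Lemma Gm_up c N : (forall k, (N./2 < k)%N -> c k = 0) -> Gm c N.+1 = (1 + 'X) * Gm c N.
Proof.
move=> H; rewrite /Gm big_ord_recr /= H ?scale0r ?addr0; last first.
  by rewrite ltn_half_double -addnn; lia.
rewrite mulr_sumr; apply: eq_bigr => i _.
case: (leqP (i : nat).*2 N) => Hi.
  by rewrite subSn // exprS -scalerAr mulrCA.
by rewrite H ?scale0r ?mulr0 // ltn_half_double.
Qed.

Lemma Gm_sh c N : (forall k, (N./2 < k)%N -> c k = 0) -> Gm (sh c) N.+2 = 'X * Gm c N.
Proof.
move=> H; rewrite /Gm big_ord_recl /= scale0r add0r big_ord_recr /= H ?scale0r ?addr0; last first.
  by rewrite ltn_half_double -addnn; lia.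
rewrite mulr_sumr; apply: eq_bigr => i _.
rewrite /bump leq0n add1n doubleS !subSS exprS -scalerAr mulrA //.
Qed.

Lemma coef0_1X M : ((1 + 'X : {poly R}) ^+ M)`_0 = 1.
Proof. by rewrite -horner_coef0 horner_exp hornerD hornerC hornerX addr0 expr1n. Qed.

Lemma Gm_inj d N : (forall k, (N./2 < k)%N -> d k = 0) -> Gm d N = 0 -> forall k, d k = 0.
Proof.
move=> H0 HG k; elim: k {-2}k (leqnn k) => [|k IH] j Hj.
- move: Hj; rewrite leqn0 => /eqP ->.
  have := congr1 (fun p : {poly R} => p`_0) HG.
  rewrite coef0 /Gm coef_sum big_ord_recl /= coefZ expr0 mul1r coef0_1X mulr1.
  rewrite big1 ?addr0 // => i _; by rewrite coefZ coefXnM /= mulr0.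
- rewrite leq_eqVlt in Hj; case/orP: Hj => [/eqP ->|Hj]; last by apply: IH.
  case: (leqP k.+1 N) => HkN; last by apply: H0; rewrite ltn_half_double -addnn; lia.
  have := congr1 (fun p : {poly R} => p`_k.+1) HG.
  rewrite coef0 /Gm coef_sum (bigD1 (Ordinal (n:=N.+1) (m:=k.+1) HkN)) //=.
  rewrite coefZ coefXnM ltnn subnn coef0_1X mulr1 big1 ?addr0 // => i Hi.
  rewrite coefZ coefXnM; case: ifP => Hik; first by rewrite mulr0.
  rewrite IH ?mul0r //.
  have : (i : nat) != k.+1 by apply/eqP => E; move: Hi; rewrite -val_eqE /= E eqxx.
  move: Hik => /negbT; rewrite -leqNgt; lia.
Qed.

Lemma coef_1X i j : ((1 + 'X : {poly R}) ^+ i)`_j = 'C(i, j)%:R.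
Proof.
elim: i j => [|i IH] j.
  by rewrite expr0 coef1; case: j.
rewrite exprS mulrDl mul1r coefD coefXM IH; case: j => [|j] //=.
  by rewrite !bin0 addr0.
by rewrite IH binS natrD addrC.
Qed.

End GmS.


Lemma sh_ext (T : nzRingType) (f g : fps T) n : (forall m, f m = g m) -> sh f n = sh g n.
Proof. by move=> H; case: n. Qed.

Section Main.
Variable R : fieldType.
Hypothesis hR : [pchar R] =i pred0.
Variable r : R.

Lemma ogf_Hom (A : nat -> nat -> R) n : ogf A n = HomP (A n) 'X 1 n.
Proof. by apply: eq_bigr => i _; rewrite expr1n mulr1. Qed.

Lemma m2_rec n : ogf (Hmat r) n.+1 =
  ('X + 1) * ogf (Hmat r) n + n%:R * (r *: 'X) * sh (ogf (Hmat r)) n.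
Proof.
rewrite !ogf_Hom (@HomP_rec _ (Hmat r) 1 1 r 'X 1).
- rewrite !scale1r mulr1 (addrC 1 'X); congr (_ + _ * _).
  by apply: sh_ext => m; rewrite ogf_Hom.
- by move=> m i Hi; apply: Hmat_tri.
- by move=> m i; rewrite Hrec // !mul1r.
Qed.

Lemma m2_0 : ogf (Hmat r) 0%N = 1.
Proof. by rewrite /ogf big_ord_recl big_ord0 addr0 Hmat_col0 // scale1r expr0. Qed.

Lemma part2 : is_Jfrac (ogf (Hmat r)) (fun _ => 'X + 1) (fun k => (k%:R * r) *: 'X).
Proof.
apply: (@hermite_Jfrac _ ('X + 1) (r *: 'X)) => //.
- by move=> k; rewrite -scalerA scaler_nat mulr_natl.
- exact: m2_0.
- exact: m2_rec.
Qed.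


Lemma sexpn_sx k t : sexpn (sx R) k t = (t == k)%:R.
Proof.
elim: k t => [|k IH] t; first by rewrite /sexpn /= /sone /sC; case: t.
rewrite /sexpn iterS -/(sexpn (sx R) k) smulx_coef; case: t => [|t] //=.
Qed.

Lemma binmat_C i k : binmat R i k = 'C(i, k)%:R.
Proof.
rewrite /binmat /exp_riordan smulC /smul.
under eq_bigr => t _ do rewrite sexpn_sx.
case: (leqP k i) => Hk.
  rewrite (bigD1 (Ordinal (n:=i.+1) (m:=k) Hk)) //= eqxx mul1r big1 ?addr0; last first.
    by move=> t Ht; rewrite -val_eqE /= in Ht; rewrite (negbTE Ht) mul0r.
  have E := bin_fact Hk.
  have := congr1 (fun m : nat => m%:R : R) E; rewrite /= !natrM => E'.
  rewrite -E' /sexp.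
  have F1 := fact_neq0 hR k; have F2 := fact_neq0 hR (i - k).
  field; by rewrite F1 F2.
rewrite bin_small // big1 ?mulr0 // => t _.
have : (t : nat) != k by apply/eqP => E; move: (ltn_ord t); rewrite E ltnS leqNgt Hk.
by move/negbTE => ->; rewrite mul0r.
Qed.

Lemma rev_Hom n : ogf (revmat (eFmat r)) n = HomP (Hmat r n) (1 + 'X) 'X n.
Proof.
apply/polyP => j.
rewrite /ogf -poly_def coef_poly /HomP coef_sum /revmat /eFmat /lt_mxmul.
case: (ltnP j n.+1) => Hj.
  rewrite ltnS in Hj; rewrite Hj; apply: eq_bigr => i _.
  rewrite binmat_C coefZ coefMXn coef_1X; congr (_ * _).
  have Hi := ltn_ord i; rewrite ltnS in Hi.
  case: ifP => H1.
    by rewrite bin_small //; lia.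
  have -> : (j - (n - i) = i - (n - j))%N by move/negbT: H1; rewrite -leqNgt; lia.
  rewrite bin_sub //; move/negbT: H1; rewrite -leqNgt; lia.
rewrite big1 // => i _; rewrite coefZ coefMXn coef_1X.
have Hi := ltn_ord i; rewrite ltnS in Hi.
case: ifP => H1; first by rewrite mulr0.
by rewrite bin_small ?mulr0 //; lia.
Qed.

Lemma m3_rec n : ogf (revmat (eFmat r)) n.+1 =
  (2%:R *: 'X + 1) * ogf (revmat (eFmat r)) n
  + n%:R * (r *: ('X * ('X + 1))) * sh (ogf (revmat (eFmat r))) n.
Proof.
rewrite !rev_Hom (@HomP_rec _ (Hmat r) 1 1 r (1 + 'X) 'X).
- congr (_ * _ + _ * _ * _).
  + rewrite !scale1r scaler_nat; ring.
  + by rewrite mulrC (addrC 1 'X).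
  + by apply: sh_ext => m; rewrite rev_Hom.
- by move=> m i Hi; apply: Hmat_tri.
- by move=> m i; rewrite Hrec // !mul1r.
Qed.

Lemma m3_0 : ogf (revmat (eFmat r)) 0%N = 1.
Proof.
rewrite rev_Hom /HomP big_ord_recl big_ord0 addr0 Hmat_col0 // scale1r !expr0 mulr1 //.
Qed.

Lemma part3 : is_Jfrac (ogf (revmat (eFmat r))) (fun _ => 2%:R *: 'X + 1)
               (fun k => (k%:R * r) *: ('X * ('X + 1))).
Proof.
apply: (@hermite_Jfrac _ (2%:R *: 'X + 1) (r *: ('X * ('X + 1)))) => //.
- by move=> k; rewrite -scalerA scaler_nat mulr_natl.
- exact: m3_0.
- exact: m3_rec.
Qed.


Section Gam.
Variable gam : nat -> nat -> R.
Hypothesis hgam : is_gamma_matrix (Hmat r) gam.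

Lemma gam_z n k : (n./2 < k)%N -> gam n k = 0.
Proof. by case: hgam => Hz _; apply: Hz. Qed.

Lemma gam_Gm n : ogf (Hmat r) n = Gm (gam n) n.
Proof.
case: hgam => _ Hg; rewrite /ogf Hg /Gm.
have Hle : (n./2.+1 <= n.+1)%N by rewrite ltnS -ltnS ltn_half_double -addnn; lia.
rewrite (big_ord_widen _ (fun k => gam n k *: ('X^k * (1 + 'X) ^+ (n - k.*2))) Hle).
rewrite big_mkcond; apply: eq_bigr => i _; case: ifP => //= /negbT.
by rewrite -leqNgt => H; rewrite gam_z ?scale0r.
Qed.

Lemma gam_tri n k : (n < k)%N -> gam n k = 0.
Proof. by move=> H; apply: gam_z; rewrite ltn_half_double -addnn; lia. Qed.

Lemma gam_rec n k : gam n.+1 k = gam n k + n%:R * r * sh (gam n.-1) k.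
Proof.
pose d := fun k => 1 * gam n.+1 k + (-1) * (1 * gam n k + (n%:R * r) * sh (gam n.-1) k).
have Hd0 : forall k, ((n.+1)./2 < k)%N -> d k = 0.
  move=> j Hj; rewrite /d gam_z // gam_z; last first.
    by apply: leq_ltn_trans Hj; apply: half_leq.
  case: n Hj {d} => [|n] Hj; first by rewrite /= !mul0r; ring.
  case: j Hj => [|j] Hj //=.
  rewrite gam_z; first by ring.
  move: Hj; rewrite !ltn_half_double -!addnn; lia.
have HG : Gm d n.+1 = 0.
  rewrite /d Gm_lin Gm_lin -!gam_Gm !scale1r scaleN1r.
  rewrite Gm_up; last by move=> j Hj; apply: gam_z.
  rewrite -gam_Gm m2_rec.
  case: n {d Hd0} => [|n] /=; first by rewrite !mul0r scale0r !addr0 (addrC 'X); ring.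
  rewrite Gm_sh; last by move=> j Hj; apply: gam_z.
  by rewrite -gam_Gm -scalerA scaler_nat mulr_natl (addrC 'X) mulrnAl scalerAl subrr.
have := Gm_inj Hd0 HG k; rewrite /d => H.
apply: subr0_eq; rewrite -H; ring.
Qed.

Lemma gam00 : gam 0%N 0%N = 1.
Proof.
case: hgam => _ Hg; have := congr1 (fun p : {poly R} => p`_0) (Hg 0%N).
rewrite /= !big_ord_recl !big_ord0 !addr0 !coefZ expr0 mul1r coef1 /= mulr1 Hmat_col0 //.
by rewrite mulr1 => <-.
Qed.

Lemma m1_rec n : ogf gam n.+1 =
  1 * ogf gam n + n%:R * (r *: 'X) * sh (ogf gam) n.
Proof.
rewrite !ogf_Hom (@HomP_rec _ gam 1 0 r 'X 1).
- rewrite scale1r scale0r addr0 mulr1; congr (_ + _ * _).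
  by apply: sh_ext => m; rewrite ogf_Hom.
- by move=> m i Hi; apply: gam_tri.
- by move=> m i; rewrite gam_rec; ring.
Qed.

Lemma m1_0 : ogf gam 0%N = 1.
Proof. by rewrite /ogf big_ord_recl big_ord0 addr0 gam00 scale1r expr0. Qed.

Lemma part1 : is_Jfrac (ogf gam) (fun _ => 1) (fun k => (k%:R * r) *: 'X).
Proof.
apply: (@hermite_Jfrac _ 1 (r *: 'X)) => //.
- by move=> k; rewrite -scalerA scaler_nat mulr_natl.
- exact: m1_0.
- exact: m1_rec.
Qed.
End Gam.

End Main.

Theorem proposition4 (R : fieldType) (hR : [pchar R] =i pred0) (r : R)
    (gam : nat -> nat -> R) (hgam : is_gamma_matrix (Hmat r) gam) :
  [/\ is_Jfrac (ogf gam) (fun _ => 1) (fun k => (k%:R * r) *: 'X),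
      is_Jfrac (ogf (Hmat r)) (fun _ => 'X + 1) (fun k => (k%:R * r) *: 'X)
    & is_Jfrac (ogf (revmat (eFmat r))) (fun _ => 2%:R *: 'X + 1)
               (fun k => (k%:R * r) *: ('X * ('X + 1)))].
Proof.
split.
- exact: (part1 hR hgam).
- exact: (part2 hR r).
- exact: (part3 hR r).
Qed.
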